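(* For a binary word $\mathrm x$ of length $m$ and $n\geq0$ let $\widetilde P_{\bar T^{-n}[\![\mathrm x]\!]}=P_{\bar T^{-n}[\![\mathrm x]\!]}\oplus P'_{[\![1]\!]}P_{\bar T^{-n}[\![\mathrm x]\!]}$, an operator on $\widetilde{\mathcal H}$. Then for all $n,m$ with $n+m<\Bbbk-1$, $$\widetilde U_\theta^*\,\widetilde P_{\bar T^{-n}[\![\mathrm x]\!]}\,\widetilde U_\theta=\widetilde P_{\bar T^{-n-1}[\![\mathrm x]\!]}.$$
   Context: Let $\Bbbk\geq3$ and $\mathcal H=(\mathbb C^2)^{\otimes\Bbbk}$ with orthonormal basis $|\mathrm y\rangle=|\mathrm y_1\rangle\otimes\cdots\otimes|\mathrm y_\Bbbk\rangle$, $\mathrm y_i\in\{0,1\}$. For a binary word $\mathrm w=\mathrm w_1\dots\mathrm w_m$ ($m\leq\Bbbk$), $P_{[\![\mathrm w]\!]}$ is the orthogonal projection onto the span of the $|\mathrm y\rangle$ with $\mathrm y_1\dots\mathrm y_m=\mathrm w$; $[\![\mathrm w]\!]\subset[0,1]$ is the dyadic cylinder of points whose first $m$ binary digits are $\mathrm w$. $\bar T(x)=2x\bmod1$, so $\bar T^{-n}[\![\mathrm w]\!]=\bigcup_{|\mathrm y|=n}[\![\mathrm y\mathrm w]\!]$, and $P_{\bar T^{-n}[\![\mathrm w]\!]}=\sum_{|\mathrm y|=n}P_{[\![\mathrm y\mathrm w]\!]}$. Let $\mathbf U$ be a $2\times2$ unitary with all entries of modulus $2^{-1/2}$, $\bar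 U|\mathrm y\rangle=|\mathrm y_2\rangle\otimes\cdots\otimes|\mathrm y_\Bbbk\rangle\otimes\mathbf U|\mathrm y_1\rangle$, $\sigma$ the unitary exchanging the last two tensor factors, and $P'_{[\![j]\!]}=\bar UP_{[\![j]\!]}\bar U^*$ for $j\in\{0,1\}$. Tower space $\widetilde{\mathcal H}=\mathcal H\oplus P'_{[\![1]\!]}\mathcal H$ with the direct-sum scalar product, and $\widetilde U_\theta(\phi_0,\phi_1)=\big(\sigma\bar UP'_{[\![1]\!]}\phi_1+\bar UP_{[\![0]\!]}\phi_0,\ e^{i\theta}\bar UP_{[\![1]\!]}\phi_0\big)$, $\theta\in\mathbb R$. *)

(* Defs.v *)
From HB Require Import structures.
From mathcomp Require Import all_boot all_order all_algebra.
From mathcomp Require Import complex.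
From mathcomp Require Import reals trigo.
Unset Printing Implicit Defensive.
Import Order.TTheory GRing.Theory Num.Theory.
Local Open Scope ring_scope.
Local Open Scope complex_scope.

Section Defs.
Context {R : realType}.
Notation C := R[i].

(* binary words of length k: the basis |y> of H = (C^2)^{(x)k} *)
Definition word (k : nat) := (k.-tuple bool)%type.

(* operators on the finite-dimensional space with orthonormal basis indexed by
   the finite type T, given by their matrix entries  A y z = <y| A |z>. *)
Definition op (T : finType) := T -> T -> C.

Definition opmul {T : finType} (A B : op T) : op T :=
  fun y z => \sum_(w : T) A y w * B w z.
Definition opadj {T : finType} (A : op T) : op T := fun y z => (A z y)^*.
Definition opadd {T : finType} (A B : op T) : op T := fun y z => A y z + B y z.
Definition opscale {T : finType} (c : C) (A : op T) : op T := fun y z => c * A y z.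
Definition op0 {T : finType} : op T := fun _ _ => 0.

(* P_[[w]] : projection onto span{|y> : y_1..y_m = w}, m = size w *)
Definition Pcyl k (w : seq bool) : op (word k) :=
  fun y z => ((y == z) && (take (size w) y == w))%:R.

(* P_{Tbar^{-n}[[w]]} = \sum_{|y| = n} P_[[y w]] *)
Definition PT k (n : nat) (w : seq bool) : op (word k) :=
  fun y z => \sum_(u : n.-tuple bool) Pcyl k (u ++ w) y z.

Definition bit (b : bool) : 'I_2 := if b then ord_max else ord0.

(* Ubar |z> = |z_2 ... z_k> (x) U |z_1> = \sum_b U_{b, z_1} |z_2 ... z_k b> *)
Definition Ubar k (U : 'M[C]_2) : op (word k) :=
  fun y z => \sum_(b : bool) ((val y == rcons (behead z) b)%:R * U (bit b) (bit (head false z))).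

Definition swap_last2 (s : seq bool) : seq bool :=
  take (size s - 2) s ++ [:: nth false s (size s - 1); nth false s (size s - 2)].
Definition sigma k : op (word k) := fun y z => (val y == swap_last2 z)%:R.

Definition Pprime k (U : 'M[C]_2) (j : bool) : op (word k) :=
  opmul (opmul (Ubar k U) (Pcyl k [:: j])) (opadj (Ubar k U)).

(* operators on H (+) H, indexed by word k + word k, given by 2x2 blocks *)
Definition block (k : nat) (A00 A01 A10 A11 : op (word k)) : op (word k + word k)%type :=
  fun y z => match y, z with
             | inl y', inl z' => A00 y' z'
             | inl y', inr z' => A01 y' z'
             | inr y', inl z' => A10 y' z'
             | inr y', inr z' => A11 y' z'
             end.

Definition expi (t : R) : C := (cos t +i* sin t).

(* Utilde_theta (phi0, phi1) =
     (sigma Ubar P'_[[1]] phi1 + Ubar P_[[0]] phi0, e^{i theta} Ubar P_[[1]] phi0) *)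
Definition Utilde k (U : 'M[C]_2) (theta : R) : op (word k + word k)%type :=
  block k (opmul (Ubar k U) (Pcyl k [:: false]))
        (opmul (opmul (sigma k) (Ubar k U)) (Pprime k U true))
        (opscale (expi theta) (opmul (Ubar k U) (Pcyl k [:: true])))
        op0.

Definition Ptilde k (U : 'M[C]_2) (n : nat) (x : seq bool) : op (word k + word k)%type :=
  block k (PT k n x) op0 op0 (opmul (Pprime k U true) (PT k n x)).

End Defs.

(* Main.v *)
Require Import Defs.
From HB Require Import structures.
From mathcomp Require Import all_boot all_order all_algebra.
From mathcomp Require Import complex.
From mathcomp Require Import reals trigo.
From mathcomp Require Import zify ring.
From Stdlib Require Import FunctionalExtensionality.
Import Order.TTheory GRing.Theory Num.Theory.
Local Open Scope ring_scope.

Section Gen.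
Context {R : realType}.
Notation C := R[i].
Context {T : finType}.
Implicit Types A B D : @op R T.

Lemma op_ext A B : (forall y z, A y z = B y z) -> A = B.
Proof. move=> H; do 2 apply: functional_extensionality => ?; exact: H. Qed.

Lemma opmulA A B D : opmul A (opmul B D) = opmul (opmul A B) D.
Proof.
apply: op_ext => y z; rewrite /opmul.
under eq_bigr do rewrite big_distrr.
rewrite exchange_big /=; apply: eq_bigr => w _.
rewrite big_distrl /=; apply: eq_bigr => v _; by rewrite mulrA.
Qed.

Lemma opmulDl A B D : opmul (opadd A B) D = opadd (opmul A D) (opmul B D).
Proof. apply: op_ext => y z; rewrite /opmul /opadd -big_split /=.
by apply: eq_bigr => w _; rewrite mulrDl. Qed.

Lemma opmulDr A B D : opmul D (opadd A B) = opadd (opmul D A) (opmul D B).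
Proof. apply: op_ext => y z; rewrite /opmul /opadd -big_split /=.
by apply: eq_bigr => w _; rewrite mulrDr. Qed.

Lemma opmul0l A : opmul op0 A = op0.
Proof. apply: op_ext => y z; rewrite /opmul /op0 big1 // => w _; exact: mul0r. Qed.
Lemma opmul0r A : opmul A op0 = op0.
Proof. apply: op_ext => y z; rewrite /opmul /op0 big1 // => w _; exact: mulr0. Qed.
Lemma opadd0l A : opadd op0 A = A.
Proof. by apply: op_ext => y z; rewrite /opadd /op0 add0r. Qed.
Lemma opadd0r A : opadd A op0 = A.
Proof. by apply: op_ext => y z; rewrite /opadd /op0 addr0. Qed.

Lemma opmulZl c A B : opmul (opscale c A) B = opscale c (opmul A B).
Proof. apply: op_ext => y z; rewrite /opmul /opscale big_distrr /=.
by apply: eq_bigr => w _; rewrite mulrA. Qed.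
Lemma opmulZr c A B : opmul A (opscale c B) = opscale c (opmul A B).
Proof. apply: op_ext => y z; rewrite /opmul /opscale big_distrr /=.
by apply: eq_bigr => w _; rewrite mulrCA. Qed.
Lemma opscaleA a b A : opscale a (opscale b A) = opscale (a * b) A.
Proof. by apply: op_ext => y z; rewrite /opscale mulrA. Qed.
Lemma opscale1 A : opscale 1 A = A.
Proof. by apply: op_ext => y z; rewrite /opscale mul1r. Qed.

Lemma opadjK A : opadj (opadj A) = A.
Proof. by apply: op_ext => y z; rewrite /opadj conjcK. Qed.
Lemma opadj0 : opadj (@op0 R T) = op0.
Proof. by apply: op_ext => y z; rewrite /opadj /op0 conjc0. Qed.
Lemma opadj_mul A B : opadj (opmul A B) = opmul (opadj B) (opadj A).
Proof. apply: op_ext => y z; rewrite /opadj /opmul rmorph_sum.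
by apply: eq_bigr => w _; rewrite rmorphM mulrC. Qed.
Lemma opadjZ c A : opadj (opscale c A) = opscale c^* (opadj A).
Proof. by apply: op_ext => y z; rewrite /opadj /opscale rmorphM. Qed.

Definition opI : @op R T := fun y z => (y == z)%:R.
Lemma opmul1l A : opmul opI A = A.
Proof. apply: op_ext => y z; rewrite /opmul /opI (bigD1 y) //= eqxx mul1r.
rewrite big1 ?addr0 // => w /negbTE; rewrite eq_sym => ->; exact: mul0r. Qed.
Lemma opmul1r A : opmul A opI = A.
Proof. apply: op_ext => y z; rewrite /opmul /opI (bigD1 z) //= eqxx mulr1.
rewrite big1 ?addr0 // => w /negbTE ->; exact: mulr0. Qed.

Definition diag (f : T -> bool) : @op R T := fun y z => ((y == z) && f y)%:R.
Lemma diag_mul f g : opmul (diag f) (diag g) = diag (fun y => f y && g y).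
Proof. apply: op_ext => y z; rewrite /opmul /diag (bigD1 y) //= eqxx /=.
rewrite big1 ?addr0; last by move=> w /negbTE; rewrite eq_sym => ->; rewrite mul0r.
by case: (y =P z) => [->|_]; case: (f z); case: (g _); rewrite /= ?mulr0 ?mul0r ?mulr1. Qed.
Lemma diag_adj f : opadj (diag f) = diag f.
Proof. apply: op_ext => y z; rewrite /opadj /diag conjc_nat.
by rewrite [z == y]eq_sym; case: eqP => [->|]. Qed.

Lemma diag_lmul f A y z : opmul (diag f) A y z = (f y)%:R * A y z.
Proof. rewrite /opmul /diag (bigD1 y) //= eqxx /=.
by rewrite big1 ?addr0 // => w /negbTE; rewrite eq_sym => ->; rewrite mul0r. Qed.
Lemma diag_rmul f A y z : opmul A (diag f) y z = A y z * (f z)%:R.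
Proof. rewrite /opmul /diag (bigD1 z) //= eqxx /=.
by rewrite big1 ?addr0 // => w /negbTE ->; rewrite mulr0. Qed.

Lemma intertw f g A : (forall y z, A y z != 0 -> f y = g z) ->
  opmul (diag f) A = opmul A (diag g).
Proof. move=> H; apply: op_ext => y z; rewrite diag_lmul diag_rmul.
have [->|/H ->] := eqVneq (A y z) 0; by rewrite ?mulr0 ?mul0r // mulrC. Qed.

Lemma Xrw A B D E : opmul A B = opmul D E -> forall X, opmul (opmul X A) B = opmul (opmul X D) E.
Proof. by move=> H X; rewrite -!opmulA H. Qed.

End Gen.
Arguments Xrw {R T A B D E}.

Section Blk.
Context {R : realType}.
Context {k : nat}.
Implicit Types a b c d e f g h : @op R (word k).

Lemma block_mul a b c d e f g h :
  opmul (block k a b c d) (block k e f g h) =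
  block k (opadd (opmul a e) (opmul b g)) (opadd (opmul a f) (opmul b h))
          (opadd (opmul c e) (opmul d g)) (opadd (opmul c f) (opmul d h)).
Proof.
apply: op_ext => y z; rewrite /opmul big_sumType /=.
by case: y => y; case: z => z.
Qed.

Lemma block_adj a b c d :
  opadj (block k a b c d) = block k (opadj a) (opadj c) (opadj b) (opadj d).
Proof. by apply: op_ext => y z; case: y => y; case: z => z. Qed.
End Blk.

Section Conc.
Variable R : realType.
Variable k : nat.
Variable U : 'M[R[i]]_2.

Lemma sum_tuple_eq n (s : seq bool) : size s = n ->
  \sum_(u : n.-tuple bool) ((s == u)%:R : R[i]) = 1.
Proof.
move=> Hs; pose u0 : n.-tuple bool := insubd [tuple of nseq n false] s.
have Hu0 : val u0 = s by rewrite val_insubd Hs eqxx.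
rewrite (bigD1 u0) //= -Hu0 eqxx big1 ?addr0 // => u Hu.
by rewrite val_eqE eq_sym (negbTE Hu).
Qed.

Lemma PT_diag n x : (n + size x <= k)%N ->
  @PT R k n x = diag (fun y : word k => take (size x) (drop n y) == x).
Proof.
move=> Hk; apply: op_ext => y z; rewrite /PT /diag /Pcyl.
case: (y == z) => /=; last by rewrite big1.
have Hsz : size (take n y) = n by rewrite size_take size_tuple; case: ltnP => // ?; apply/eqP; rewrite eqn_leq; apply/andP; split=> //; apply: leq_trans (leq_addr _ _) Hk.
under eq_bigr => u _ do rewrite size_cat size_tuple takeD eqseq_cat ?Hsz ?size_tuple //.
case: (take _ (drop n y) == x); last by rewrite big1 // => u _; rewrite andbF.
under eq_bigr => u _ do rewrite andbT.
by rewrite sum_tuple_eq.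
Qed.

Lemma Pcyl_diag b : (0 < k)%N ->
  @Pcyl R k [:: b] = diag (fun y : word k => head false y == b).
Proof.
move=> Hk; apply: op_ext => y z; rewrite /Pcyl /diag /=.
case: y => [[|a t] Hy] /=; first by rewrite -(eqP Hy) in Hk.
by rewrite take0 eqseq_cons andbT.
Qed.

Definition rotT (z : word k) (b : bool) : word k := insubd z (rcons (behead z) b).
Definition swT (z : word k) : word k := insubd z (swap_last2 z).

Lemma val_rotT z b : (0 < k)%N -> tval (rotT z b) = rcons (behead z) b.
Proof. move=> Hk; rewrite /rotT val_insubd size_rcons size_behead size_tuple prednK // eqxx //. Qed.

Lemma swap_cat2 (t : seq bool) a b : swap_last2 (t ++ [:: a; b]) = t ++ [:: b; a].
Proof.
rewrite /swap_last2 size_cat /= addnK take_cat ltnn subnn take0 cats0.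
have -> : (size t + 2 - 1 = (size t).+1)%N by rewrite addn2 subn1.
by rewrite !nth_cat ltnn subnn ltnNge leqnSn /= subSnn.
Qed.

Lemma split2 (s : seq bool) : (1 < size s)%N -> exists t a b, s = t ++ [:: a; b].
Proof.
case/lastP: s => [//|s b]; case/lastP: s => [//|t a] _.
by exists t, a, b; rewrite -cats1 -cats1 -catA.
Qed.

Lemma size_swap (s : seq bool) : (1 < size s)%N -> size (swap_last2 s) = size s.
Proof. by case/split2 => t [a [b ->]]; rewrite swap_cat2 !size_cat. Qed.

Lemma swapK (s : seq bool) : (1 < size s)%N -> swap_last2 (swap_last2 s) = s.
Proof. by case/split2 => t [a [b ->]]; rewrite !swap_cat2. Qed.

Lemma val_swT z : (1 < k)%N -> tval (swT z) = swap_last2 z.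
Proof. by move=> Hk; rewrite /swT val_insubd size_swap size_tuple ?Hk ?eqxx. Qed.

Lemma swTK z : (1 < k)%N -> swT (swT z) = z.
Proof. by move=> Hk; apply: val_inj => /=; rewrite !val_swT // swapK // size_tuple. Qed.

Lemma Ubar_E y z : (0 < k)%N -> Ubar k U y z =
  \sum_(b : bool) (y == rotT z b)%:R * U (bit b) (bit (head false z)).
Proof. by move=> Hk; apply: eq_bigr => b _; rewrite -val_eqE /= val_rotT. Qed.

Lemma sigma_E y z : (1 < k)%N -> @sigma R k y z = (y == swT z)%:R.
Proof. by move=> Hk; rewrite /sigma -val_eqE /= val_swT. Qed.
End Conc.
Arguments rotT {k}. Arguments swT {k}.

Section Conc2.
Variable R : realType.
Variable k : nat.
Variable U : 'M[R[i]]_2.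
Hypothesis Hk : (2 < k)%N.
Hypothesis HU : U *m (map_mx (@Num.conj _) U)^T = 1%:M.

Let Hk0 : (0 < k)%N. Proof. by apply: leq_trans Hk. Qed.
Let Hk1 : (1 < k)%N. Proof. by apply: leq_trans Hk. Qed.

Lemma U_orth i j : \sum_(b : bool) (U (bit b) i)^*%C * U (bit b) j = (i == j)%:R.
Proof.
have := mulmx1C HU => /matrixP /(_ i j); rewrite !mxE => <-.
rewrite big_bool big_ord_recl big_ord1 /= addrC; congr (_ + _); rewrite !mxE //.
by have -> : lift ord0 ord0 = ord_max :> 'I_2 by apply: val_inj.
Qed.

Lemma sum_pick (r : word k) (G : word k -> R[i]) :
  \sum_w (w == r)%:R * G w = G r.
Proof. rewrite (bigD1 r) //= eqxx mul1r big1 ?addr0 // => w /negbTE ->; exact: mul0r. Qed.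

Lemma L_adjUb (X : op (word k)) y z :
  opmul (opadj (Ubar k U)) X y z =
  \sum_(d : bool) (U (bit d) (bit (head false y)))^*%C * X (rotT y d) z.
Proof.
rewrite /opmul /opadj.
under eq_bigr do rewrite Ubar_E // rmorph_sum big_distrl.
rewrite exchange_big /=; apply: eq_bigr => d _.
under eq_bigr do rewrite rmorphM rmorph_nat -mulrA.
by rewrite sum_pick.
Qed.

Lemma L_Ub (X : op (word k)) v z :
  opmul X (Ubar k U) v z =
  \sum_(c : bool) U (bit c) (bit (head false z)) * X v (rotT z c).
Proof.
rewrite /opmul.
under eq_bigr do rewrite Ubar_E // big_distrr.
rewrite exchange_big /=; apply: eq_bigr => c _.
under eq_bigr do rewrite mulrCA.
by rewrite sum_pick mulrC.
Qed.

Lemma L_S (X : op (word k)) u z : opmul (@sigma R k) X u z = X (swT u) z.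
Proof.
rewrite /opmul; under eq_bigr => v _ do rewrite sigma_E //.
rewrite -(sum_pick (swT u) (fun v => X v z)); apply: eq_bigr => v _.
by have -> : (u == swT v) = (v == swT u) by apply/idP/idP => /eqP ->; rewrite swTK.
Qed.

Lemma rotT_eq (y z : word k) b c : (rotT y b == rotT z c) = (behead y == behead z) && (b == c).
Proof. by rewrite -val_eqE /= !val_rotT // eqseq_rcons. Qed.

Lemma word_eq (y z : word k) : (y == z) = (head false y == head false z) && (behead y == behead z).
Proof.
rewrite -val_eqE /=; case: y z => [[|a s] Hs] [[|b t] Ht] //=.
- by move: Hk0; rewrite -(eqP Hs).
- by move: Hk0; rewrite -(eqP Ht).
Qed.

Lemma bit_eq a b : (bit a == bit b) = (a == b).
Proof. by case: a; case: b. Qed.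

Lemma Ub_unit : opmul (opadj (Ubar k U)) (Ubar k U) = opI.
Proof.
apply: op_ext => y z; rewrite L_adjUb /opI.
under eq_bigr do rewrite Ubar_E // big_distrr.
rewrite exchange_big /=.
under eq_bigr do (under eq_bigr do rewrite rotT_eq mulrCA).
rewrite word_eq -bit_eq.
case: (behead y == behead z) => /=.
- rewrite andbT -U_orth; apply: eq_bigr => b _.
  rewrite big_bool /=; case: b => /=; by rewrite mul1r mul0r ?addr0 ?add0r.
- by rewrite andbF big1 // => b _; rewrite big1 // => c _; rewrite mul0r.
Qed.

Lemma S_unit : opmul (opadj (@sigma R k)) (@sigma R k) = opI.
Proof.
apply: op_ext => y z; rewrite /opmul /opadj /opI.
under eq_bigr do rewrite !sigma_E // conjc_nat.
rewrite (sum_pick (swT y) (fun w => (w == swT z)%:R)).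
by rewrite (inj_eq (can_inj (fun w => @swTK k w Hk1))).
Qed.

Lemma Ub_supp y z : Ubar k U y z != 0 -> exists b, y = rotT z b.
Proof.
rewrite Ubar_E // big_bool /=.
case: (y =P rotT z true) => [->|_]; first by exists true.
case: (y =P rotT z false) => [->|_]; first by exists false.
by rewrite !mul0r addr0 eqxx.
Qed.

Lemma Q_Ub n (x : seq bool) : (n + size x < k)%N ->
  opmul (diag (fun y : word k => take (size x) (drop n y) == x)) (Ubar k U) =
  opmul (Ubar k U) (diag (fun y : word k => take (size x) (drop n.+1 y) == x)).
Proof.
move=> Hn; apply: intertw => y z /Ub_supp [b ->].
have Hsz : (n <= size (behead z))%N by rewrite size_behead size_tuple; lia.
rewrite val_rotT // drop_rcons // -cats1 takel_cat; last first.
  by rewrite size_drop size_behead size_tuple; lia.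
by rewrite -drop1 drop_drop addn1.
Qed.

Lemma Q_S n (x : seq bool) : (n + size x <= k - 2)%N ->
  opmul (diag (fun y : word k => take (size x) (drop n y) == x)) (@sigma R k) =
  opmul (@sigma R k) (diag (fun y : word k => take (size x) (drop n y) == x)).
Proof.
move=> Hn; apply: intertw => y z; rewrite sigma_E //.
case: (y =P swT z) => [-> _|]; last by rewrite eqxx.
rewrite val_swT //.
have := @split2 (tval z); rewrite size_tuple => /(_ Hk1) [t [a [b Hz]]].
have Ht : size t = (k - 2)%N by rewrite -(size_tuple z) Hz size_cat /= addnK.
have Hn' : (n <= size t)%N by rewrite Ht; apply: leq_trans (leq_addr _ _) Hn.
rewrite Hz swap_cat2 !drop_cat.
case: ltnP => Hlt.
  by rewrite !takel_cat // size_drop Ht leq_subRL // ?addnC // -Ht.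
have Ent : n = size t by apply/eqP; rewrite eqn_leq Hn' Hlt.
have Hx : size x = 0%N by lia.
by rewrite Ent subnn Hx.
Qed.

Lemma behead_rcons_ne (s : seq bool) c : (0 < size s)%N ->
  behead (rcons s c) = rcons (behead s) c.
Proof. by case: s. Qed.

Lemma head_rotT (z : word k) c : head false (rotT z c) = head false (behead z).
Proof.
rewrite val_rotT //; have : (0 < size (behead z))%N by rewrite size_behead size_tuple; lia.
by case: (behead z).
Qed.

Lemma E_char (y z : word k) t a d c b : behead y = rcons t a ->
  (swT (rotT y d) == rotT (rotT z c) b) =
  ((t == behead (behead z)) && (d == c)) && (a == b).
Proof.
move=> Hy; rewrite -val_eqE /= val_swT // !val_rotT // Hy.
rewrite behead_rcons_ne; last by rewrite size_behead size_tuple; lia.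
by rewrite -!cats1 -catA /= swap_cat2 -cat1s catA !cats1 !eqseq_rcons.
Qed.

Lemma Zero :
  opmul (diag (fun y : word k => head false y == false))
    (opmul (opadj (Ubar k U)) (opmul (@sigma R k)
      (opmul (opmul (Ubar k U) (Ubar k U)) (diag (fun y : word k => head false y == true))))) = op0.
Proof.
apply: op_ext => y z; rewrite diag_lmul L_adjUb /op0.
case Hy: (head false y); first by rewrite mul0r.
have : (0 < size (behead y))%N by rewrite size_behead size_tuple; lia.
case/lastP E: (behead y) => [//|t a] _.
under eq_bigr do rewrite L_S diag_rmul L_Ub.
case Hz: (head false z); last by rewrite big1 ?mulr0 // => d _; rewrite mulr0 mulr0.
under eq_bigr do (under eq_bigr do rewrite Ubar_E // head_rotT).
under eq_bigr do (under eq_bigr do (under eq_bigr do rewrite (E_char _ _ _ _ _ _ _ E))).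
have Horth := U_orth (bit false) (bit true).
rewrite !big_bool in Horth *.
have tf : (true == false) = false by [].
have ft : (false == true) = false by [].
case: (t == _); case: a E => E; rewrite ?eqxx ?tf ?ft ?andbT ?andbF ?andTb ?andFb;
rewrite ?mul0r ?mul1r ?mulr1 ?mulr0 ?addr0 ?add0r //.
all: rewrite /= in Horth *; rewrite ?(mulr0, mul0r, addr0, add0r, mulr1, mul1r) //.
all: by rewrite !mulrA -mulrDl Horth mul0r.
Qed.
End Conc2.

Section ExS.
Local Open Scope complex_scope.
Lemma expi_unit (R : realType) (t : R) : (expi t)^* * expi t = 1.
Proof.
rewrite /expi /=; apply/eqP; rewrite eq_complex /=.
rewrite -(cos2Dsin2 t) !expr2; apply/andP; split; apply/eqP; ring.
Qed.
End ExS.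

Theorem corollary2 (R : realType) (k : nat) (U : 'M[R[i]]_2) (theta : R)
    (n : nat) (x : seq bool) :
  (3 <= k)%N ->
  U *m (map_mx (@Num.conj _) U)^T = 1%:M ->
  (forall i j : 'I_2, `|U i j| = ((Num.sqrt (2 : R))^-1)%:C%C) ->
  (n + size x < k - 1)%N ->
  opmul (opadj (Utilde k U theta)) (opmul (Ptilde k U n x) (Utilde k U theta))
  = Ptilde k U n.+1 x.
Proof.
move=> Hk HU _ Hn.
have Hk0 : (0 < k)%N by lia.
rewrite /Utilde /Ptilde /Pprime !PT_diag; try lia.
rewrite !Pcyl_diag //.
set Ub := Ubar k U; set S := @sigma R k.
set Q := diag (fun y : word k => take (size x) (drop n y) == x).
set Q1 := diag (fun y : word k => take (size x) (drop n.+1 y) == x).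
set P0 := diag (fun y : word k => head false y == false).
set P1 := diag (fun y : word k => head false y == true).
rewrite block_adj !block_mul !opmul0l !opmul0r !opadd0l !opadd0r !opadj0 !opmul0l.
rewrite !opmul0r !opadd0r.
have Hk2 : (2 < k)%N by lia.
have F1 : forall X : @op R (word k), opmul (opmul X (opadj Ub)) Ub = X.
  by move=> X; rewrite -opmulA Ub_unit // opmul1r.
have E2 : opmul Q Ub = opmul Ub Q1 by apply: Q_Ub; lia.
have E3 := @Q_Ub R k U Hk2 n.+1 x (ltac:(lia)).
set Q2 := diag (fun y : word k => take (size x) (drop n.+2 y) == x) in E3.
rewrite -/Ub -/Q1 in E3.
have E2' : opmul (opadj Ub) Q = opmul Q1 (opadj Ub).
  by rewrite -[Q]diag_adj -[Q1]diag_adj -!opadj_mul E2.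
have E3' : opmul (opadj Ub) Q1 = opmul Q2 (opadj Ub).
  by rewrite -[Q1]diag_adj -[Q2]diag_adj -!opadj_mul E3.
have E4 : opmul Q S = opmul S Q by apply: Q_S; lia.
have E4' : opmul (opadj S) Q = opmul Q (opadj S).
  by rewrite -[Q]diag_adj -!opadj_mul E4.
have F5 : forall X : @op R (word k), opmul (opmul X (opadj S)) S = X.
  by move=> X; rewrite -opmulA S_unit // opmul1r.
have DX : forall (X : @op R (word k)) (f g : word k -> bool), opmul (opmul X (diag f)) (diag g) = opmul X (diag (fun y => f y && g y)).
  by move=> X f g; rewrite -opmulA diag_mul.
have DC : forall (X : @op R (word k)) (f g : word k -> bool), opmul (opmul X (diag f)) (diag g) = opmul (opmul X (diag g)) (diag f).
  by move=> X f g; rewrite !DX; congr (opmul X (diag _)); apply: functional_extensionality => y; rewrite andbC.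
have Z := @Zero R k U Hk2 HU.
rewrite !opmulA in Z.
have G2 : opmul (opadj (opmul Ub P0)) (opmul Q (opmul (opmul S Ub) (opmul (opmul Ub P1) (opadj Ub)))) = op0.
  rewrite opadj_mul diag_adj !opmulA.
  rewrite (Xrw E4) (Xrw E2) (Xrw E3) DC.
  by rewrite Z !opmul0l.
congr (block k _ _ _ _).
- rewrite !opadjZ !opmulZl !opmulZr opscaleA expi_unit opscale1.
  rewrite !opadj_mul !diag_adj !opmulA !F1 !(Xrw E2') !F1 !diag_mul.
  apply: op_ext => y z; rewrite /opadd /diag /Q1 /diag.
  case: (y == z) => /=; last by rewrite addr0.
  case: (head false y); case: (take _ _ == x) => /=; by rewrite ?addr0 ?add0r.
- exact: G2.
- rewrite -[Q]diag_adj -(opadjK (opmul Ub P0)) -!opadj_mul -opmulA G2.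
  exact: opadj0.
- rewrite !opadj_mul opadjK !diag_adj !opmulA.
  rewrite (Xrw E4') F5 (Xrw E2') F1 !(Xrw E3') F1 !DX.
  congr (opmul (opmul Ub (diag _)) _); apply: functional_extensionality => y.
  by case: (head false y == true); rewrite ?andbT ?andbF.
Qed.
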